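(* Let $d\ge2$ and let $\mathbf{p}^\star=(1,p_2^\star,\dots,p_d^\star)$ be a maximizer of the problem $$\max\Big\{\frac{\prod_{i=1}^dp_i}{D_1(\mathbf{p})^d}\;:\;\mathbf{p}\in(0,\infty)^d,\ p_1=1,\ D_1(\mathbf{p})^2\ge D_j(\mathbf{p})^2\text{ for all }j\in\{2,\dots,d\}\Big\}.$$ Then there exists a unique $k\in\{2,\dots,d\}$ such that $D_k(\mathbf{p}^\star)=D_1(\mathbf{p}^\star)=D(\mathbf{p}^\star)$, and, writing $D_k=D_k(\mathbf{p}^\star)$, $$p_j^\star=\begin{cases}\dfrac{\sqrt2\,D_k}{(j-1)\sqrt{dk}}\sqrt{\dfrac{2k-1}{k-1}}, & j\in\{2,\dots,k-1\},\\[2mm] \dfrac{D_k}{\sqrt{dk}}, & j=k,\\[2mm] \dfrac{D_k}{(j-1)\sqrt d}, & j\in\{k+1,\dots,d\}.\end{cases}$$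
   Context: For $k\in\{1,\dots,d\}$ let $w_{k,i}=0$ for $i<k$, $w_{k,k}=k$, $w_{k,i}=i-1$ for $k<i\le d$, $D_k(\mathbf{p})=\sqrt{\sum_{i=1}^dw_{k,i}^2p_i^2}$, and $D(\mathbf{p})=\max_{k\in\{1,\dots,d\}}D_k(\mathbf{p})$. *)

(* Defs.v *)
(* R : realType, vectors p : nat -> R indexed 1..d *)
From mathcomp Require Import all_boot all_order all_algebra.
From mathcomp Require Import reals.
Set Implicit Arguments. Unset Strict Implicit. Unset Printing Implicit Defensive.
Import Order.TTheory GRing.Theory Num.Theory.
Local Open Scope ring_scope.

Definition w (R : realType) (k i : nat) : R :=
  if (i < k)%N then 0 else if i == k then k%:R else (i.-1)%:R.

Definition Dk (R : realType) (d k : nat) (p : nat -> R) : R :=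
  Num.sqrt (\sum_(1 <= i < d.+1) (w R k i) ^+ 2 * (p i) ^+ 2).

(* D(p) = max_{k in 1..d} D_k(p)  (all D_k >= 0, so 0 is a neutral start) *)
Definition Dmax (R : realType) (d : nat) (p : nat -> R) : R :=
  \big[Num.max/0]_(1 <= k < d.+1) Dk d k p.

Definition objective (R : realType) (d : nat) (p : nat -> R) : R :=
  (\prod_(1 <= i < d.+1) p i) / (Dk d 1 p) ^+ d.

Definition feasible (R : realType) (d : nat) (p : nat -> R) : Prop :=
  (forall i, (1 <= i <= d)%N -> 0 < p i) /\ p 1%N = 1 /\
  (forall j, (2 <= j <= d)%N -> (Dk d j p) ^+ 2 <= (Dk d 1 p) ^+ 2).

Definition is_maximizer (R : realType) (d : nat) (p : nat -> R) : Prop :=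
  feasible d p /\ forall q : nat -> R, feasible d q -> objective d q <= objective d p.

(* Main.v *)
Require Import Defs.
From mathcomp Require Import all_boot all_order all_algebra.
From mathcomp Require Import reals.
From mathcomp Require Import ring lra.
Import Order.TTheory GRing.Theory Num.Theory.
Local Open Scope ring_scope.
Set Implicit Arguments. Unset Strict Implicit. Unset Printing Implicit Defensive.

Lemma Dk_sq (R : realType) (d k : nat) (q : nat -> R) :
  Dk d k q ^+ 2 = \sum_(1 <= i < d.+1) w R k i ^+ 2 * q i ^+ 2.
Proof.
rewrite /Dk sqr_sqrtr // sumr_ge0 // => i _.
by rewrite mulr_ge0 // sqr_ge0.
Qed.

Definition good (R : realType) (d : nat) (q : nat -> R) : Prop :=
  q 1%N = 1 /\ q 2%N ^+ 2 = 1/3 /\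
  (forall i, (3 <= i <= d)%N -> ((i.-1)%:R * q i) ^+ 2 = 2/3).

Lemma good_D1 (R : realType) (n : nat) (q : nat -> R) :
  good n.+2 q -> Dk n.+2 1 q ^+ 2 = 2/3 * (n.+2)%:R.
Proof.
move=> [q1 [q2 qi]].
rewrite Dk_sq big_ltn // big_ltn //.
rewrite (eq_big_nat _ _ (F2 := fun _ => 2/3)); last first.
  move=> i /andP[h1 h2]; rewrite /w.
  have -> : (i < 1)%N = false by case: i h1 {h2}.
  have -> : (i == 1)%N = false by case: i h1 {h2} => [|[|]].
  by rewrite -exprMn qi // h1 -ltnS h2.
rewrite sumr_const_nat /w /= q1 q2 subSS subSS subn1 /= -mulr_natr.
have e : (n.+2)%:R = n%:R + 2 :> R by rewrite -addn2 natrD.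
rewrite e. lra.
Qed.

Lemma good_D2 (R : realType) (n : nat) (q : nat -> R) :
  good n.+2 q -> Dk n.+2 2 q ^+ 2 = 2/3 * (n.+2)%:R.
Proof.
move=> [q1 [q2 qi]].
rewrite Dk_sq big_ltn // big_ltn //.
rewrite (eq_big_nat _ _ (F2 := fun _ => 2/3)); last first.
  move=> i /andP[h1 h2]; rewrite /w.
  have -> : (i < 2)%N = false by case: i h1 {h2} => [|[|]].
  have -> : (i == 2)%N = false by case: i h1 {h2} => [|[|[|]]].
  by rewrite -exprMn qi // h1 -ltnS h2.
rewrite sumr_const_nat /w /= q1 q2 subSS subSS subn1 /= -mulr_natr.
have e : (n.+2)%:R = n%:R + 2 :> R by rewrite -addn2 natrD.
rewrite e. lra.
Qed.

Lemma good_Dk (R : realType) (n k : nat) (q : nat -> R) :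
  good n.+2 q -> (3 <= k <= n.+2)%N -> Dk n.+2 k q ^+ 2 < 2/3 * (n.+2)%:R.
Proof.
move=> [q1 [q2 qi]] /andP[k3 kn].
have h1k : (1 <= k)%N by apply: leq_trans k3.
have hkn : (k <= n.+3)%N by apply: leq_trans kn _.
rewrite Dk_sq (@big_cat_nat _ _ _ k) //.
rewrite (eq_big_nat _ _ (F2 := fun _ => 0)); last first.
  by move=> i /andP[h1 h2]; rewrite /w h2 expr0n /= mul0r.
rewrite sumr_const_nat mul0rn /= add0r big_ltn //.
rewrite (eq_big_nat _ _ (F2 := fun _ => 2/3)); last first.
  move=> i /andP[h1 h2]; rewrite /w.
  have -> : (i < k)%N = false by apply/negbTE; rewrite -leqNgt ltnW.
  have -> : (i == k)%N = false by apply/negbTE; rewrite eq_sym neq_ltn h1.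
  by rewrite -exprMn qi // (leq_trans k3 (ltnW h1)) -ltnS h2.
rewrite sumr_const_nat /w ltnn eqxx.
have hk := qi k; rewrite k3 kn /= in hk.
move: hk; clear h1k hkn; case: k k3 kn => [|[|[|m]]] // _ kn.
move=> /(_ isT) hk; rewrite subSS -[_ *+ (_ - _)]mulr_natr natrB //.
have e0 : (n.+2)%:R = n%:R + 2 :> R by rewrite -addn2 natrD.
rewrite e0.
have e1 : (m.+3)%:R = m%:R + 3 :> R by rewrite -addn3 natrD.
have e2 : (m.+3).-1%:R = m%:R + 2 :> R by rewrite /= -addn2 natrD.
rewrite e2 in hk; rewrite e1.
have hM : 0 <= m%:R :> R by [].
set t := q m.+3 ^+ 2.
have ht : (m%:R + 2) ^+ 2 * t = 2/3 by rewrite /t -hk exprMn.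
have tp : 0 < t by nra.
nra.
Qed.
Lemma amgm_nat (R : realType) (n : nat) (e : nat -> R) :
  (forall i, (1 <= i <= n)%N -> 0 <= e i) ->
  \prod_(1 <= i < n.+1) e i <= ((\sum_(1 <= i < n.+1) e i) / n%:R) ^+ n
   ?= iff [forall i : 'I_n, forall j : 'I_n, e i.+1 == e j.+1].
Proof.
move=> e0.
have := @leif_AGM R _ predT (fun i : 'I_n => e i.+1).
rewrite cardT size_enum_ord.
rewrite !big_add1 /= !big_mkord.
apply; move=> i _; by apply: e0; rewrite ltn_ord.

Qed.

Definition S3 (R : realType) (n : nat) (q : nat -> R) : R :=
  \sum_(3 <= i < n.+3) ((i.-1)%:R * q i) ^+ 2.
Definition Px (R : realType) (n : nat) (q : nat -> R) : R :=
  \prod_(3 <= i < n.+3) ((i.-1)%:R * q i) ^+ 2.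

Lemma sum3_w (R : realType) (n k : nat) (q : nat -> R) : (k <= 2)%N ->
  \sum_(3 <= i < n.+3) w R k i ^+ 2 * q i ^+ 2 = S3 n q.
Proof.
move=> hk; apply: eq_big_nat => i /andP[h1 h2]; rewrite /w.
have -> : (i < k)%N = false by apply/negbTE; rewrite -leqNgt (leq_trans hk) // ltnW.
have -> : (i == k)%N = false by apply/negbTE; rewrite eq_sym neq_ltn (leq_ltn_trans hk h1).
by rewrite -exprMn.
Qed.

Lemma T_split (R : realType) (n : nat) (q : nat -> R) : q 1%N = 1 ->
  Dk n.+2 1 q ^+ 2 = 1 + q 2%N ^+ 2 + S3 n q.
Proof.
move=> q1; rewrite Dk_sq big_ltn // big_ltn // sum3_w // /w /= q1.
rewrite !expr1n !mul1r; lra.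
Qed.

Lemma D2_split (R : realType) (n : nat) (q : nat -> R) :
  Dk n.+2 2 q ^+ 2 = 4 * q 2%N ^+ 2 + S3 n q.
Proof.
rewrite Dk_sq big_ltn // big_ltn // sum3_w // /w /=.
rewrite expr0n /= mul0r add0r; congr (_ * _ + _).
by rewrite -natrX.
Qed.

Lemma amgm_app (R : realType) (n : nat) (q : nat -> R) : q 1%N = 1 ->
  let a := q 2%N ^+ 2 in
  let e := fun i : nat => if (i <= 2)%N then (1 + a) / 2 else ((i.-1)%:R * q i) ^+ 2 in
  ((1 + a) / 2) ^+ 2 * Px n q <= (Dk n.+2 1 q ^+ 2 / (n.+2)%:R) ^+ (n.+2)
   ?= iff [forall i : 'I_(n.+2), forall j : 'I_(n.+2), e i.+1 == e j.+1].
Proof.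
move=> q1 a e.
have e0 : forall i, (1 <= i <= n.+2)%N -> 0 <= e i.
  move=> i _; rewrite /e; case: ifP => _; last exact: sqr_ge0.
  by rewrite divr_ge0 // addr_ge0 // sqr_ge0.
have := amgm_nat e0.
have Hp : \prod_(1 <= i < n.+3) e i = ((1 + a) / 2) ^+ 2 * Px n q.
  rewrite big_ltn // big_ltn // /e /= mulrA -expr2; congr (_ * _).
  apply: eq_big_nat => i /andP[h1 _].
  by have -> : (i <= 2)%N = false by apply/negbTE; rewrite -ltnNge.
have Hs : \sum_(1 <= i < n.+3) e i = Dk n.+2 1 q ^+ 2.
  rewrite T_split // big_ltn // big_ltn // /e /=.
  have -> : \sum_(3 <= i < n.+3) (if (i <= 2)%N then (1 + a) / 2 else ((i.-1)%:R * q i) ^+ 2) = S3 n q.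
    apply: eq_big_nat => i /andP[h1 _].
    by have -> : (i <= 2)%N = false by apply/negbTE; rewrite -ltnNge.
  rewrite /a; lra.
by rewrite Hp Hs.
Qed.

Lemma c2 (R : realType) (n : nat) (q : nat -> R) : feasible n.+2 q ->
  3 * q 2%N ^+ 2 <= 1.
Proof.
move=> [_ [q1 hD]]; have := hD 2%N isT.
rewrite D2_split T_split //; lra.
Qed.

Lemma Px_gt0 (R : realType) (n : nat) (q : nat -> R) : feasible n.+2 q -> 0 < Px n q.
Proof.
move=> [hp _]; rewrite /Px big_nat_cond; apply: prodr_gt0 => i /andP[/andP[h1 h2] _].
rewrite exprn_gt0 // mulr_gt0 //; last by apply: hp; rewrite (leq_trans _ h1) //= -ltnS.
by rewrite ltr0n; case: i h1 {h2} => [|[|[|]]].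
Qed.

Lemma key_bound (R : realType) (n : nat) (q : nat -> R) : feasible n.+2 q ->
  q 2%N ^+ 2 * Px n q <= 3/4 * (Dk n.+2 1 q ^+ 2 / (n.+2)%:R) ^+ (n.+2).
Proof.
move=> hf; have h3 := c2 hf; have hP := Px_gt0 hf.
have [_ [q1 _]] := hf.
have := (amgm_app n q1).1.
set G := (_ ^+ n.+2); set a := q 2%N ^+ 2 => H; rewrite -/a in h3.
have a0 : 0 <= a by apply: sqr_ge0.
have h : 0 <= Px n q * ((1 - 3 * a) * (3 - a)).
  by apply: mulr_ge0; [exact: ltW | apply: mulr_ge0; lra].
nra.
Qed.

Lemma key_eq (R : realType) (n : nat) (q : nat -> R) : feasible n.+2 q ->
  3/4 * (Dk n.+2 1 q ^+ 2 / (n.+2)%:R) ^+ (n.+2) <= q 2%N ^+ 2 * Px n q ->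
  q 2%N ^+ 2 = 1/3 /\ (forall i, (3 <= i <= n.+2)%N -> ((i.-1)%:R * q i) ^+ 2 = 2/3).
Proof.
move=> hf hge; have h3 := c2 hf; have hP := Px_gt0 hf.
have [_ [q1 _]] := hf.
have := amgm_app n q1.
set G := (_ ^+ n.+2); set a := q 2%N ^+ 2 => H.
rewrite -/a -/G in h3 hge.
have a0 : 0 <= a by apply: sqr_ge0.
have H1 := H.1.
have h : 0 <= Px n q * (16 * a - 3 * (1 + a) ^+ 2) by nra.
have h' : 0 <= 16 * a - 3 * (1 + a) ^+ 2.
  by move: h; rewrite pmulr_rge0.
have ha : a = 1/3 by nra.
split => //.
have Heq : ((1 + a) / 2) ^+ 2 * Px n q == G.
  by rewrite eq_le H1 /=; rewrite ha in hge H1 *; nra.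
move: Heq; rewrite H.2 => /forallP/(_ ord0)/forallP => Hall i /andP[i3 iN].
have hi : (i.-1 < n.+2)%N by case: i i3 iN.
move/eqP: (Hall (Ordinal hi)); rewrite /=.
have -> : (i.-1.+1 = i) by case: i i3 {iN hi}.
have -> : (i <= 2)%N = false by apply/negbTE; rewrite -ltnNge.
move=> <-; rewrite ha; lra.
Qed.

Definition Kc (R : realType) (n : nat) : R := \prod_(3 <= i < n.+3) (i.-1)%:R.

Lemma obj_rel (R : realType) (n : nat) (q : nat -> R) : q 1%N = 1 ->
  objective n.+2 q ^+ 2 * (Kc R n ^+ 2 * ((n.+2)%:R) ^+ (n.+2)) =
  q 2%N ^+ 2 * Px n q / (Dk n.+2 1 q ^+ 2 / (n.+2)%:R) ^+ (n.+2).
Proof.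
move=> q1.
have T0 : 0 < Dk n.+2 1 q ^+ 2.
  rewrite T_split //.
  have : 0 <= S3 n q by rewrite sumr_ge0 // => i _; rewrite sqr_ge0.
  have := sqr_ge0 (q 2%N); lra.
have D0 : Dk n.+2 1 q != 0 by apply: contraTneq T0 => ->; rewrite expr0n ltxx.
have Pe : Px n q = (Kc R n * \prod_(3 <= i < n.+3) q i) ^+ 2.
  by rewrite /Px prodrXl big_split.
rewrite Pe /objective big_ltn // big_ltn // q1 mul1r.
set D := Dk n.+2 1 q; set K := Kc R n; set Q := \prod_(3 <= i < n.+3) q i.
set N := (n.+2)%:R.
have N0 : N != 0 by rewrite pnatr_eq0.
rewrite [(D ^+ 2 / N) ^+ _]expr_div_n -exprM mulnC exprM.
set U := D ^+ n.+2; set V := N ^+ n.+2.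
have U0 : U != 0 by rewrite expf_neq0.
have V0 : V != 0 by rewrite expf_neq0.
field.
by rewrite U0 V0.
Qed.

Definition pstar (R : realType) (i : nat) : R :=
  if i == 1%N then 1 else if i == 2%N then Num.sqrt (1/3)
  else Num.sqrt (2/3) / (i.-1)%:R.

Lemma pstar_good (R : realType) (n : nat) : good n.+2 (@pstar R).
Proof.
split; first by rewrite /pstar eqxx.
split; first by rewrite /pstar /= sqr_sqrtr // divr_ge0.
move=> i /andP[i3 _]; rewrite /pstar.
have -> : (i == 1%N) = false by case: i i3 => [|[|[|]]].
have -> : (i == 2%N) = false by case: i i3 => [|[|[|]]].
have i0 : (i.-1)%:R != 0 :> R by rewrite pnatr_eq0; case: i i3 => [|[|[|]]].
by rewrite mulrC divfK // sqr_sqrtr // divr_ge0.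
Qed.

Lemma pstar_feasible (R : realType) (n : nat) : feasible n.+2 (@pstar R).
Proof.
have [q1 _] := pstar_good R n.
split.
  move=> i /andP[i1 _]; rewrite /pstar.
  case: ifP => h1 //; case: ifP => h2; first by rewrite sqrtr_gt0 divr_gt0.
  rewrite divr_gt0 ?sqrtr_gt0 ?divr_gt0 // ltr0n.
  by case: i i1 h1 h2 {q1} => [|[|]].
split => // j /andP[j2 jn].
have g := pstar_good R n.
rewrite good_D1 //; case: j j2 jn => [|[|[|j]]] // _ jn.
  by rewrite good_D2.
by apply/ltW/good_Dk.
Qed.

Lemma Dk_ge0 (R : realType) d k (q : nat -> R) : 0 <= Dk d k q.
Proof. exact: sqrtr_ge0. Qed.

Lemma good_Dmax (R : realType) (n : nat) (q : nat -> R) :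
  good n.+2 q -> Dk n.+2 1 q = Dmax n.+2 q.
Proof.
move=> g; rewrite /Dmax big_ltn // max_l //.
rewrite big_nat_cond; apply: bigmax_le; first exact: Dk_ge0.
move=> k /andP[/andP[k2 kn] _].
have h : Dk n.+2 k q ^+ 2 <= Dk n.+2 1 q ^+ 2.
  rewrite good_D1 //; case: k k2 kn => [|[|[|k]]] // _ kn.
    by rewrite good_D2.
  by apply/ltW/good_Dk.
by rewrite -(ler_pXn2r (n := 2)) ?nnegrE ?Dk_ge0.
Qed.

Lemma pstar_W (R : realType) (n : nat) :
  (@pstar R) 2%N ^+ 2 * Px n (@pstar R) /
    (Dk n.+2 1 (@pstar R) ^+ 2 / (n.+2)%:R) ^+ (n.+2) = 3/4.
Proof.
have g := pstar_good R n; have [_ [q2 qi]] := g.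
rewrite good_D1 // q2.
have -> : Px n (@pstar R) = (2/3) ^+ n.
  rewrite /Px (eq_big_nat _ _ (F2 := fun _ => 2/3)) ?prodr_const_nat ?subSS ?subn0 //.
have N0 : (n.+2)%:R != 0 :> R by rewrite pnatr_eq0.
rewrite (mulfK N0) !exprS.
have h23 : (0:R) < 2/3 by lra.
have h : (2/3 : R) ^+ n != 0 by rewrite expf_neq0 // lt0r_neq0.
field.
by rewrite h.
Qed.

Theorem corollary1 (R : realType) (d : nat) (p : nat -> R) :
  (2 <= d)%N -> is_maximizer d p ->
  exists k : nat,
    [/\ (2 <= k <= d)%N,
        Dk d k p = Dk d 1 p /\ Dk d 1 p = Dmax d p,
        (forall k' : nat, (2 <= k' <= d)%N ->
            Dk d k' p = Dk d 1 p -> Dk d 1 p = Dmax d p -> k' = k) &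
        (forall j : nat, (2 <= j <= d)%N ->
           p j = (if (j < k)%N then
                    Num.sqrt 2 * Dk d k p / (j.-1%:R * Num.sqrt (d%:R * k%:R))
                    * Num.sqrt ((2 * k%:R - 1) / (k%:R - 1))
                  else if j == k then
                    Dk d k p / Num.sqrt (d%:R * k%:R)
                  else
                    Dk d k p / (j.-1%:R * Num.sqrt d%:R)))].
Proof.
case: d p => [|[|n]] // p _ [hf hmax].
have hs := hmax _ (pstar_feasible R n).
have o0 : 0 <= objective n.+2 (@pstar R).
  rewrite /objective divr_ge0 ?exprn_ge0 ?Dk_ge0 //.
  rewrite big_nat_cond; apply: prodr_ge0 => i /andP[/andP[i1 iN] _].
  have [hp _] := pstar_feasible R n.
  by apply/ltW/hp; rewrite i1 -ltnS.
have sq : objective n.+2 (@pstar R) ^+ 2 <= objective n.+2 p ^+ 2.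
  by rewrite !expr2 ler_pM.
have C0 : 0 <= Kc R n ^+ 2 * ((n.+2)%:R) ^+ (n.+2) by rewrite mulr_ge0 ?sqr_ge0 ?exprn_ge0.
have := ler_wpM2r C0 sq.
have [_ [q1 _]] := hf.
have [qs1 _] := pstar_good R n.
rewrite obj_rel // obj_rel // pstar_W.
have G0 : 0 < (Dk n.+2 1 p ^+ 2 / (n.+2)%:R) ^+ n.+2.
  apply: exprn_gt0; rewrite divr_gt0 // T_split //.
  have : 0 <= S3 n p by rewrite sumr_ge0 // => i _; rewrite sqr_ge0.
  have := sqr_ge0 (p 2%N); lra.
rewrite ler_pdivlMr // => hge.
have [p2 pi] := key_eq hf hge.
have g : good n.+2 p by [].
have [hp _] := hf.
have D21 : Dk n.+2 2 p = Dk n.+2 1 p.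
  by apply/eqP; rewrite -(eqrXn2 (n := 2)) ?Dk_ge0 // good_D2 // good_D1.
exists 2%N; split => //.
- by rewrite D21 good_Dmax.
- move=> k' /andP[k2 kn] hk _.
  case: k' k2 kn hk => [|[|[|k]]] // _ kn hk.
  have := @good_Dk R n k.+3 p g kn; rewrite hk good_D1 // ltxx //.
- move=> j /andP[j2 jn].
  rewrite ltnNge j2 /=.
  have pj0 : 0 < p j by apply: hp; rewrite (leq_trans _ j2).
  have N0 : 0 < (n.+2)%:R :> R by rewrite ltr0n.
  case: ifP => hj.
    move/eqP: hj => ->; apply/eqP.
    rewrite -(eqrXn2 (n := 2)) ?divr_ge0 ?Dk_ge0 ?sqrtr_ge0 //; last exact: ltW (hp 2%N isT).
    rewrite expr_div_n good_D2 // sqr_sqrtr ?mulr_ge0 ?ltW // p2.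
    apply/eqP; field.
    by apply: lt0r_neq0; have : (0:R) <= n%:R by []; lra.
  have j3 : (3 <= j)%N by case: j j2 hj {jn pj0} => [|[|[|]]].
  have hpj := pi j; rewrite j3 jn in hpj; have {}hpj := hpj isT.
  have J0 : (j.-1)%:R != 0 :> R by rewrite pnatr_eq0; case: j j3 {hj hpj jn j2 pj0}=> [|[|[|]]].
  apply/eqP.
  rewrite -(eqrXn2 (n := 2)) ?divr_ge0 ?Dk_ge0 ?mulr_ge0 ?sqrtr_ge0 ?ltW //.
  rewrite expr_div_n exprMn good_D2 // sqr_sqrtr ?ltW //.
  move: hpj; rewrite exprMn => hpj.
  have -> : p j ^+ 2 = 2/3 / (j.-1)%:R ^+ 2.
    by rewrite -hpj [RHS]mulrC mulKf // expf_neq0.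
  apply/eqP; field.
  rewrite J0 andbT; apply: lt0r_neq0; have : (0:R) <= n%:R by []; lra.
by rewrite lt0r J0 ler0n.
Qed.
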